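(* Fix $N\ge 3$ and $\lambda>0$, and regard the quantity $F(1)$ defined by the recursion in the context as a function of $p\in[0,1)$. Then, as $p\downarrow 0$, $$F(1)=F_0(1)-\lambda^{-1}H_{N-1}\,p+o(p),$$ where $F_0(1)=\sum_{i=1}^{N-1}\frac{1}{\lambda i(N-i)}=\frac{2}{\lambda N}H_{N-1}$ and $H_n=\sum_{k=1}^n1/k$.
   Context: For $N\ge3$, $\lambda>0$, $p\in[0,1)$, define $F^{(a)}(i)$ for $2\le i\le N-1$, $1\le a\le i-1$ by $F^{(a)}(N-1)=\frac{(1-p)^a}{\lambda(N-1)}$ and, for $2\le i\le N-2$, $F^{(a)}(i)=(1-p)^{a(N-i)}\big(\frac{1}{\lambda i(N-i)}+F^{(1)}(i+1)\big)+\sum_{c=1}^{N-i-1}\binom{N-i}{c}[1-(1-p)^a]^c(1-p)^{a(N-i-c)}F^{(c)}(i+c)$, and set $F(1)=(1-p)^{N-1}\big(\frac{1}{\lambda(N-1)}+F^{(1)}(2)\big)+\sum_{c=1}^{N-2}\binom{N-1}{c}p^c(1-p)^{N-1-c}F^{(c)}(1+c)$. (By the paper's Theorem 1, $F(1)$ is the expected flooding time in an $N$-node network whose edges alternate between ON periods of mean $\mu^{-1}$ and exponential OFF periods of mean $\lambda^{-1}$, with stationary ON probability $p=\lambda/(\lambda+\mu)$ and instantaneous message transmission over ON edges; $F_0(1)$ is its value at $p=0$.) *)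

(* Defs.v *)
From Stdlib Require Import Reals Lra Lia Arith List.
Open Scope R_scope.

Definition sumR (f : nat -> R) (l : list nat) : R :=
  fold_right (fun k acc => f k + acc) 0 l.

(* sum_{c=lo}^{hi} f c  (empty if hi < lo) *)
Definition sum_range (lo hi : nat) (f : nat -> R) : R :=
  sumR f (seq lo (S hi - lo)).

Definition harm (n : nat) : R := sum_range 1 n (fun k => / INR k).

(* One step of the recursion: value of F^{(a)}(i) for 2 <= i <= N-2,
   given a table T holding F^{(b)}(j) for j > i. *)
Definition Fstep (N : nat) (lam p : R) (T : nat -> nat -> R) (i a : nat) : R :=
  (1 - p) ^ (a * (N - i)) * (1 / (lam * INR i * INR (N - i)) + T (i + 1)%nat 1%nat)
  + sum_range 1 (N - i - 1)
      (fun c => C (N - i) c * (1 - (1 - p) ^ a) ^ c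
                * (1 - p) ^ (a * (N - i - c)) * T (i + c)%nat c).

(* Ftab N lam p m j a = F^{(a)}(j), valid for N-1-m <= j <= N-1. *)
Fixpoint Ftab (N : nat) (lam p : R) (m : nat) : nat -> nat -> R :=
  match m with
  | O => fun j a => if Nat.eqb j (N - 1) then (1 - p) ^ a / (lam * INR (N - 1)) else 0
  | S m' =>
      let T := Ftab N lam p m' in
      let i := (N - 1 - S m')%nat in
      fun j a => if Nat.eqb j i then Fstep N lam p T i a else T j a
  end.

(* F^{(a)}(i), meaningful for 2 <= i <= N-1, 1 <= a <= i-1. *)
Definition Fa (N : nat) (lam p : R) (i a : nat) : R :=
  Ftab N lam p (N - 1 - i) i a.

Definition F1 (N : nat) (lam p : R) : R :=
  (1 - p) ^ (N - 1) * (1 / (lam * INR (N - 1)) + Fa N lam p 2 1)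
  + sum_range 1 (N - 2)
      (fun c => C (N - 1) c * p ^ c * (1 - p) ^ (N - 1 - c) * Fa N lam p (1 + c) c).

(* Main.v *)
Require Import Defs.
From Stdlib Require Import Reals Lra Lia Arith List.
From Coquelicot Require Import Coquelicot.
Open Scope R_scope.

Lemma sumR_app f l1 l2 : sumR f (l1 ++ l2) = sumR f l1 + sumR f l2.
Proof. induction l1; simpl; [ring| rewrite IHl1; ring]. Qed.

Lemma sumR_ext_in f g l : (forall c, In c l -> f c = g c) -> sumR f l = sumR g l.
Proof. induction l; simpl; intros H; auto. rewrite H by auto. rewrite IHl by auto. auto. Qed.

Lemma sumR_zero l : sumR (fun _ => 0) l = 0.
Proof. induction l; simpl; auto. rewrite IHl; ring. Qed.

Lemma sumR_plus f g l : sumR (fun k => f k + g k) l = sumR f l + sumR g l.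
Proof. induction l; simpl; [ring| rewrite IHl; ring]. Qed.

Lemma sumR_scal k f l : sumR (fun c => k * f c) l = k * sumR f l.
Proof. induction l; simpl; [ring| rewrite IHl; ring]. Qed.

Lemma sumR_rev f l : sumR f (rev l) = sumR f l.
Proof. induction l; simpl; auto. rewrite sumR_app; simpl. rewrite IHl; ring. Qed.

Lemma sumR_map f g l : sumR f (map g l) = sumR (fun k => f (g k)) l.
Proof. induction l; simpl; auto. rewrite IHl; auto. Qed.

Lemma sum_range_S lo hi f : (lo <= hi)%nat ->
  sum_range lo hi f = f lo + sum_range (S lo) hi f.
Proof.
  intros H. unfold sum_range. replace (S hi - lo)%nat with (S (S hi - S lo))%nat by lia.
  reflexivity.
Qed.

Lemma sum_range_nil lo hi f : (hi < lo)%nat -> sum_range lo hi f = 0.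
Proof. intros H. unfold sum_range. replace (S hi - lo)%nat with 0%nat by lia. reflexivity. Qed.

Lemma sum_range_ext lo hi f g : (forall c, (lo <= c <= hi)%nat -> f c = g c) ->
  sum_range lo hi f = sum_range lo hi g.
Proof. intros H. unfold sum_range. apply sumR_ext_in. intros c Hc. apply in_seq in Hc. apply H; lia. Qed.

Lemma rev_seq1 n : rev (seq 1 n) = map (fun i => S n - i)%nat (seq 1 n).
Proof.
  induction n; auto.
  change (seq 1 (S n)) with (1 :: seq 2 n)%nat at 2.
  rewrite (seq_S n 1). rewrite rev_app_distr. rewrite IHn.
  change (rev ((1 + n)%nat :: nil)) with ((S n) :: nil).
  cbn [app map]. f_equal. change (seq 2 n) with (seq (S 1) n). rewrite <- (seq_shift n 1). rewrite map_map. apply map_ext. intros; lia.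
Qed.

Lemma sum_range_rev n f : sum_range 1 n (fun i => f (S n - i)%nat) = sum_range 1 n f.
Proof.
  unfold sum_range. replace (S n - 1)%nat with n by lia.
  rewrite <- sumR_map, <- rev_seq1, sumR_rev. auto.
Qed.

Lemma C_n_1 n : (1 <= n)%nat -> Binomial.C n 1 = INR n.
Proof.
  intros H. unfold Binomial.C. destruct n as [|n]; [lia|].
  replace (S n - 1)%nat with n by lia. rewrite fact_simpl, mult_INR.
  simpl (INR (fact 1)). field. apply INR_fact_neq_0.
Qed.

Lemma deq (f : R -> R) (x l l' : R) : is_derive f x l -> l = l' -> is_derive f x l'.
Proof. intros H ->; exact H. Qed.

Lemma dmult (f g : R -> R) (x df dg : R) : is_derive f x df -> is_derive g x dg ->
  is_derive (fun t => f t * g t) x (df * g x + f x * dg).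
Proof. intros H1 H2. exact (is_derive_mult f g x df dg H1 H2 Rmult_comm). Qed.

Lemma dplus (f g : R -> R) (x df dg : R) : is_derive f x df -> is_derive g x dg ->
  is_derive (fun t => f t + g t) x (df + dg).
Proof. intros H1 H2. exact (is_derive_plus f g x df dg H1 H2). Qed.

Lemma dconst (a x : R) : is_derive (fun _ : R => a) x 0.
Proof. exact (is_derive_const a x). Qed.

Lemma did (x : R) : is_derive (fun t : R => t) x 1.
Proof. exact (is_derive_id x). Qed.

Lemma dext (f g : R -> R) (x l : R) : (forall t : R, f t = g t) -> is_derive f x l -> is_derive g x l.
Proof. exact (is_derive_ext f g x l). Qed.

Lemma d1mp (x : R) : is_derive (fun p : R => 1 - p) x (-1).
Proof.
  apply (dext (fun p : R => 1 + (-1) * p)). intros t; ring.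
  eapply deq. apply dplus. apply dconst. apply is_derive_scal, did. ring.
Qed.

Lemma dpow1mp k : is_derive (fun p : R => (1 - p) ^ k) 0 (- INR k).
Proof.
  eapply deq. apply is_derive_pow, d1mp. rewrite Rminus_0_r, pow1. ring.
Qed.

Lemma dh a : is_derive (fun p : R => 1 - (1 - p) ^ a) 0 (INR a).
Proof.
  apply (dext (fun p : R => 1 + (-1) * (1 - p) ^ a)). intros; ring.
  eapply deq. apply dplus. apply dconst. apply is_derive_scal, dpow1mp. ring.
Qed.

Lemma dterm (A : R) (h : R -> R) dh (q : R -> R) dq (g : R -> R) dg v c : is_derive h 0 dh -> h 0 = 0 ->
  is_derive q 0 dq -> q 0 = 1 -> is_derive g 0 dg -> g 0 = v -> (1 <= c)%nat ->
  is_derive (fun p => A * h p ^ c * q p * g p) 0 (if Nat.eqb c 1 then A * dh * v else 0).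
Proof.
  intros Hh h0 Hq q0 Hg g0 Hc.
  pose proof (is_derive_scal _ _ A _ (is_derive_pow h c 0 dh Hh)) as H1.
  pose proof (dmult _ _ _ _ _ H1 Hq) as H2.
  pose proof (dmult _ _ _ _ _ H2 Hg) as H3.
  apply (deq _ _ _ _ H3). rewrite h0, q0, g0.
  destruct c as [|[|c]]; [lia| |]; simpl; ring.
Qed.

Lemma dsumR (f : nat -> R -> R) d l :
  (forall c, In c l -> is_derive (f c) 0 (d c)) ->
  is_derive (fun p => sumR (fun c => f c p) l) 0 (sumR d l).
Proof.
  induction l; intros H; simpl.
  - apply dconst.
  - apply dplus. apply H; simpl; auto. apply IHl. intros; apply H; simpl; auto.
Qed.

Lemma dsum (f : nat -> R -> R) d lo hi :
  (forall c, (lo <= c <= hi)%nat -> is_derive (f c) 0 (d c)) ->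
  is_derive (fun p => sum_range lo hi (fun c => f c p)) 0 (sum_range lo hi d).
Proof.
  intros H. unfold sum_range. apply dsumR. intros c Hc. apply in_seq in Hc. apply H; lia.
Qed.

Lemma sum_range_first1 n (X : nat -> R) : (1 <= n)%nat ->
  sum_range 1 n (fun c => if Nat.eqb c 1 then X c else 0) = X 1%nat.
Proof.
  intros H. rewrite sum_range_S by lia. simpl Nat.eqb at 1.
  rewrite (sum_range_ext _ _ _ (fun _ => 0)). unfold sum_range; rewrite sumR_zero; ring.
  intros c Hc. destruct (Nat.eqb_spec c 1); [lia|ring].
Qed.

Definition V N lam j := sum_range j (N - 1) (fun i => 1 / (lam * INR i * INR (N - i))).
Definition Dcl N lam j a :=
  - INR a / (lam * INR j) - sum_range (S j) (N - 1) (fun k => 1 / (lam * INR k)).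

Lemma INR_pos_ne n : (1 <= n)%nat -> INR n <> 0.
Proof. intros H. apply not_0_INR. lia. Qed.

Lemma main N lam (HN : (3 <= N)%nat) (Hlam : 0 < lam) : forall m, (m <= N - 3)%nat ->
  forall j a, (N - 1 - m <= j <= N - 1)%nat ->
  Ftab N lam 0 m j a = V N lam j /\ is_derive (fun p : R => Ftab N lam p m j a) 0 (Dcl N lam j a).
Proof.
  induction m as [|m IH]; intros Hm j a Hj.
  - assert (j = N - 1)%nat by lia. subst j. simpl Ftab. rewrite Nat.eqb_refl.
    split.
    + unfold V. rewrite sum_range_S by lia. rewrite sum_range_nil by lia.
      replace (N - (N - 1))%nat with 1%nat by lia. simpl INR at 2. rewrite Rminus_0_r, pow1.
      change (INR 1) with 1. field. split; [apply INR_pos_ne; lia| lra].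
    + unfold Dcl. rewrite sum_range_nil by lia.
      apply (dext (fun p : R => (1 - p) ^ a * / (lam * INR (N - 1)))). intros t. unfold Rdiv. ring.
      eapply deq. apply (is_derive_ext _ _ _ _ (fun t => Rmult_comm _ _)).
      apply is_derive_scal, dpow1mp. unfold Rdiv; ring.
  - simpl Ftab. destruct (Nat.eqb_spec j (N - 1 - S m)) as [E|E].
    2:{ apply IH; lia. }
    set (i := (N - 1 - S m)%nat) in *. subst j.
    assert (Hi : (2 <= i /\ i <= N - 2)%nat) by (unfold i; lia).
    assert (IHc : forall c b : nat, (1 <= c <= N - i - 1)%nat ->
       Ftab N lam 0 m (i + c)%nat b = V N lam (i + c)%nat /\ is_derive (fun p : R => Ftab N lam p m (i + c)%nat b) 0 (Dcl N lam (i + c)%nat b)).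
    { intros c b Hc. apply IH; unfold i in *; lia. }
    destruct (IHc 1%nat 1%nat) as [V1 D1]. { lia. }
    rewrite Nat.add_1_r in V1, D1.
    assert (Hni : INR (N - i) <> 0) by (apply INR_pos_ne; lia).
    assert (Hi0 : INR i <> 0) by (apply INR_pos_ne; lia).
    assert (HSi : INR (S i) <> 0) by (apply INR_pos_ne; lia).
    split.
    + unfold Fstep. rewrite (sum_range_ext 1 (N - i - 1) _ (fun _ => 0)).
      2:{ intros c Hc. replace (1 - (1 - 0) ^ a) with 0 by (rewrite Rminus_0_r, pow1; ring).
          rewrite pow_i by lia. ring. }
      unfold sum_range at 1. rewrite sumR_zero.
      rewrite Nat.add_1_r, V1, Rminus_0_r, pow1.
      unfold V. rewrite (sum_range_S i) by lia. ring.
    + apply (dext (fun p : R => (1 - p) ^ (a * (N - i)) * (1 / (lam * INR i * INR (N - i)) + Ftab N lam p m (S i) 1)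
          + sum_range 1 (N - i - 1) (fun c => Binomial.C (N - i) c * (1 - (1 - p) ^ a) ^ c
              * (1 - p) ^ (a * (N - i - c)) * Ftab N lam p m (i + c)%nat c))).
      { intros t. unfold Fstep. rewrite Nat.add_1_r. reflexivity. }
      eapply deq. apply dplus. apply dmult. apply dpow1mp. apply dplus. apply dconst. apply D1.
      apply (dsum (fun c (p : R) => Binomial.C (N - i) c * (1 - (1 - p) ^ a) ^ c
              * (1 - p) ^ (a * (N - i - c)) * Ftab N lam p m (i + c)%nat c)
           (fun c => if Nat.eqb c 1 then Binomial.C (N - i) c * INR a * V N lam (i + c)%nat else 0)).
      { intros c Hc. destruct (IHc c c Hc) as [Vc Dc].
        apply (dterm (Binomial.C (N - i) c) (fun p => 1 - (1 - p) ^ a) (INR a)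
          (fun p => (1 - p) ^ (a * (N - i - c))) (- INR (a * (N - i - c)))
          (fun p => Ftab N lam p m (i + c)%nat c) (Dcl N lam (i + c)%nat c)).
        apply dh. rewrite Rminus_0_r, pow1; ring. apply dpow1mp. rewrite Rminus_0_r, pow1; ring.
        apply Dc. apply Vc. lia. }
      rewrite sum_range_first1 by lia. rewrite Nat.add_1_r, V1, Rminus_0_r, pow1.
      rewrite C_n_1 by lia. rewrite mult_INR.
      unfold V, Dcl.
      rewrite (sum_range_S (S i) (N - 1) (fun k => 1 / (lam * INR k))) by lia. change (INR 1) with 1.
      rewrite Rplus_0_l, Rmult_1_l. match goal with |- ?x = ?y => change (@eq R x y) end. field. repeat split; auto; lra.
Qed.

Lemma FaL N lam (HN : (3 <= N)%nat) (Hlam : 0 < lam) i a : (2 <= i <= N - 1)%nat ->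
  Fa N lam 0 i a = V N lam i /\ is_derive (fun p : R => Fa N lam p i a) 0 (Dcl N lam i a).
Proof. intros H. unfold Fa. apply main; auto; lia. Qed.

Lemma F1_0 N lam (HN : (3 <= N)%nat) (Hlam : 0 < lam) : F1 N lam 0 = V N lam 1.
Proof.
  destruct (FaL N lam HN Hlam 2 1) as [V2 _]. lia.
  unfold F1. rewrite (sum_range_ext 1 (N - 2) _ (fun _ => 0)).
  2:{ intros c Hc. rewrite pow_i by lia. ring. }
  unfold sum_range at 1. rewrite sumR_zero. rewrite V2, Rminus_0_r, pow1.
  unfold V at 2. rewrite sum_range_S by lia. change (INR 1) with 1.
  replace (N - 1)%nat with (N - 1)%nat by lia. rewrite Rmult_1_r, Rplus_0_r. unfold V. ring.
Qed.

Lemma F1_d N lam (HN : (3 <= N)%nat) (Hlam : 0 < lam) :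
  is_derive (fun p : R => F1 N lam p) 0 (- / lam * harm (N - 1)).
Proof.
  destruct (FaL N lam HN Hlam 2 1) as [V2 D2]. lia.
  assert (HN1 : INR (N - 1) <> 0) by (apply INR_pos_ne; lia).
  unfold F1.
  eapply deq. apply dplus. apply dmult. apply dpow1mp. apply dplus. apply dconst. apply D2.
  apply (dsum (fun c (p : R) => Binomial.C (N - 1) c * p ^ c * (1 - p) ^ (N - 1 - c) * Fa N lam p (1 + c) c)
           (fun c => if Nat.eqb c 1 then Binomial.C (N - 1) c * 1 * V N lam (1 + c) else 0)).
  { intros c Hc. destruct (FaL N lam HN Hlam (1 + c) c) as [Vc Dc]. lia.
    apply (dterm (Binomial.C (N - 1) c) (fun p => p) 1
          (fun p => (1 - p) ^ (N - 1 - c)) (- INR (N - 1 - c))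
          (fun p => Fa N lam p (1 + c) c) (Dcl N lam (1 + c) c)).
    apply did. reflexivity. apply dpow1mp. rewrite Rminus_0_r, pow1; ring.
    apply Dc. apply Vc. lia. }
  rewrite sum_range_first1 by lia. rewrite V2, Rminus_0_r, pow1.
  rewrite C_n_1 by lia. simpl (1 + 1)%nat.
  unfold Dcl, harm. rewrite (sum_range_S 1 (N - 1)) by lia.
  rewrite (sum_range_S 2 (N - 1)) by lia.
  unfold sum_range. rewrite (sumR_ext_in (fun k => 1 / (lam * INR k)) (fun k => / lam * / INR k)).
  2:{ intros k Hk. apply in_seq in Hk. field. split; [apply INR_pos_ne; lia| lra]. }
  rewrite sumR_scal. change (INR 1) with 1. change (INR 2) with 2.
  match goal with |- ?x = ?y => change (@eq R x y) end.
  field. lra.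
Qed.

Lemma part2 N lam (HN : (3 <= N)%nat) (Hlam : 0 < lam) :
  sum_range 1 (N - 1) (fun i => 1 / (lam * INR i * INR (N - i)))
     = 2 / (lam * INR N) * harm (N - 1).
Proof.
  assert (HN0 : INR N <> 0) by (apply INR_pos_ne; lia).
  rewrite (sum_range_ext _ _ _ (fun i => / (lam * INR N) * (/ INR i + / INR (N - i)))).
  2:{ intros c Hc. assert (E : INR N = INR c + INR (N - c)) by (rewrite <- plus_INR; f_equal; lia).
      assert (INR c <> 0) by (apply INR_pos_ne; lia).
      assert (INR (N - c) <> 0) by (apply INR_pos_ne; lia).
      rewrite E. field. repeat split; auto; try lra. }
  assert (R : sum_range 1 (N - 1) (fun i => / INR (N - i)) = harm (N - 1)).
  { unfold harm. rewrite <- (sum_range_rev (N - 1) (fun k => / INR k)).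
    apply sum_range_ext. intros c Hc. f_equal. f_equal. lia. }
  unfold sum_range in *. rewrite sumR_scal, sumR_plus, R. unfold harm, sum_range. field.
  split; auto; lra.
Qed.

Theorem lemma1 (N : nat) (lam : R) (HN : (3 <= N)%nat) (Hlam : 0 < lam) :
  F1 N lam 0 = sum_range 1 (N - 1) (fun i => 1 / (lam * INR i * INR (N - i)))
  /\ sum_range 1 (N - 1) (fun i => 1 / (lam * INR i * INR (N - i)))
     = 2 / (lam * INR N) * harm (N - 1)
  /\ (forall eps : R, 0 < eps ->
        exists delta : R, 0 < delta /\
          forall p : R, 0 < p -> p < 1 -> p < delta ->
            Rabs (F1 N lam p - (F1 N lam 0 - / lam * harm (N - 1) * p)) <= eps * p).
Proof.
  split; [rewrite F1_0 by auto; reflexivity|].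
  split; [apply part2; auto|].
  intros eps Heps.
  pose proof (F1_d N lam HN Hlam) as D. apply is_derive_Reals in D.
  destruct (D eps Heps) as [delta Hd].
  exists delta. split; [apply cond_pos|].
  intros p Hp _ Hpd.
  assert (Hne : p <> 0) by lra.
  specialize (Hd p Hne). rewrite Rabs_pos_eq in Hd by lra. specialize (Hd Hpd).
  rewrite Rplus_0_l in Hd.
  replace (F1 N lam p - (F1 N lam 0 - / lam * harm (N - 1) * p))
    with (p * ((F1 N lam p - F1 N lam 0) / p - - / lam * harm (N - 1))) by (field; split; auto; lra).
  rewrite Rabs_mult, (Rabs_pos_eq p) by lra.
  rewrite Rmult_comm. apply Rmult_le_compat_r; lra.
Qed.
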